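(* Let $(G,\mathcal J)$ be a generalized Kähler structure on a Courant algebroid $E$ and $D$ a Levi-Civita connection of $G$. For $u\in E$ let $A_u$ be the endomorphism $v\mapsto (D_v\mathcal J)u$ of $E$ and $A_u^{\mathrm{sym}}$ its $\langle\cdot,\cdot\rangle$-symmetric part. Then the generalized connection $$\tilde D_uv=D_uv-\tfrac12\mathcal J(D_u\mathcal J)v-\tfrac14\{A_u^{\mathrm{sym}},\mathcal J\}v$$ (where $\{X,Y\}=XY+YX$) is a torsion-free generalized connection satisfying $\tilde DG=0$ and $\tilde D\mathcal J=0$.
   Context: A Courant algebroid on a manifold $M$ is a real vector bundle $E\to M$ with a nondegenerate symmetric bilinear form $\langle\cdot,\cdot\rangle$, an $\mathbb R$-bilinear bracket $[\cdot,\cdot]$ on $\Gamma(E)$ and a bundle map $\pi:E\to TM$ such that for all $u,v,w\in\Gamma(E)$, $f\in C^\infty(M)$: $[u,[v,w]]=[[u,v],w]+[v,[u,w]]$; $\pi([u,v])=[\pi(u),\pi(v)]$; $[u,fv]=\pi(u)(f)v+f[u,v]$; $\pi(u)\langle v,w\rangle=\langle[u,v],w\rangle+\langle v,[u,w]\rangle$; $2\langle[u,u],v\rangle=\pi(v)\langle u,u\rangle$. A generalized connection is an $\mathbb R$-linear $D:\Gamma(E)\to\Gamma(E^*\otimes E)$ with $D_u(fv)=\pi(u)(f)v+fD_uv$ and $\pi(u)\langle v,w\rangle=\langle D_uv,w\rangle+\langle v,D_uw\rangle$; its torsion is $T^D(u,v)=D_uv-D_vu-[u,v]+(Du)^*v$,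 with $(Du)^*$ the $\langle\cdot,\cdot\rangle$-adjoint of $w\mapsto D_wu$. A generalized metric is a subbundle $E_+$ on which $\langle\cdot,\cdot\rangle$ is nondegenerate; with $E_-=E_+^\perp$ it gives $G=\langle\cdot,\cdot\rangle|_{E_+}-\langle\cdot,\cdot\rangle|_{E_-}$ and $G^{\mathrm{end}}=\pm\mathrm{Id}$ on $E_\pm$. A Levi-Civita connection of $G$ is a torsion-free generalized connection with $DG=0$. A generalized almost complex structure is a $\langle\cdot,\cdot\rangle$-orthogonal $\mathcal J$ with $\mathcal J^2=-\mathrm{Id}$, integrable if $N_{\mathcal J}(u,v)=[\mathcal Ju,\mathcal Jv]-[u,v]-\mathcal J([\mathcal Ju,v]+[u,\mathcal Jv])=0$. $(G,\mathcal J)$ is generalized almost Hermitian if $G(\mathcal Ju,\mathcal Jv)=G(u,v)$, and generalized Kähler if moreover $\mathcal J$ and $G^{\mathrm{end}}\mathcal J$ are integrable. *)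

(* Defs.v *)
(* Algebraic (section-level) model of Courant algebroids:
   A plays the role of C^oo(M) (a commutative R-algebra, R a real field),
   E the module of sections Gamma(E), vector fields = R-linear derivations of A. *)
From HB Require Import structures.
From mathcomp Require Import all_boot all_order all_algebra.
Set Implicit Arguments. Unset Strict Implicit. Unset Printing Implicit Defensive.
Import Order.TTheory GRing.Theory Num.Theory.
Local Open Scope ring_scope.

Section CourantDefs.
Variables (R : realFieldType) (A : comAlgType R) (E : lmodType A).

Definition is_derivation (X : A -> A) : Prop :=
  (forall (r : R) (f g : A), X (r *: f + g) = r *: X f + X g) /\
  (forall f g : A, X (f * g) = X f * g + f * X g).

Definition alinear (F : E -> E) : Prop :=
  forall (f : A) (u v : E), F (f *: u + v) = f *: F u + F v.
Definition afunctional (phi : E -> A) : Prop :=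
  forall (f : A) (u v : E), phi (f *: u + v) = f * phi u + phi v.

(* Courant algebroid structure (ip = <.,.>, br = bracket, pi = anchor) *)
Record courant (ip : E -> E -> A) (br : E -> E -> E) (pi : E -> A -> A) : Prop := {
  ip_sym : forall u v, ip u v = ip v u;
  ip_lin : forall u, afunctional (ip u);
  ip_nondeg : forall u, (forall v, ip u v = 0) -> u = 0;
  ip_full : forall phi, afunctional phi -> exists u, forall v, phi v = ip u v;
  br_addl : forall u v w, br (u + v) w = br u w + br v w;
  br_addr : forall u v w, br u (v + w) = br u v + br u w;
  br_scalel : forall (r : R) u v, br (r%:A *: u) v = r%:A *: br u v;
  br_scaler : forall (r : R) u v, br u (r%:A *: v) = r%:A *: br u v;
  pi_der : forall u, is_derivation (pi u);
  pi_lin : forall (f : A) u v g, pi (f *: u + v) g = f * pi u g + pi v g;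
  br_jacobi : forall u v w, br u (br v w) = br (br u v) w + br v (br u w);
  pi_br : forall u v f, pi (br u v) f = pi u (pi v f) - pi v (pi u f);
  br_leibniz : forall u (f : A) v, br u (f *: v) = pi u f *: v + f *: br u v;
  pi_ip : forall u v w, pi u (ip v w) = ip (br u v) w + ip v (br u w);
  br_symm : forall u v, ip (br u u) v *+ 2 = pi v (ip u u)
}.

Record gen_connection (ip : E -> E -> A) (pi : E -> A -> A) (D : E -> E -> E) : Prop := {
  gc_tensorial : forall (f : A) u w v, D (f *: u + w) v = f *: D u v + D w v;
  gc_add : forall u v w, D u (v + w) = D u v + D u w;
  gc_leibniz : forall u (f : A) v, D u (f *: v) = pi u f *: v + f *: D u v;
  gc_metric : forall u v w, pi u (ip v w) = ip (D u v) w + ip v (D u w)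
}.

Definition is_adjoint (ip : E -> E -> A) (F Fs : E -> E) : Prop :=
  forall v w, ip (Fs v) w = ip v (F w).

Definition torsion_free (ip : E -> E -> A) (br : E -> E -> E) (D : E -> E -> E) : Prop :=
  forall u, exists Fs, is_adjoint ip (fun w => D w u) Fs /\
    forall v, D u v - D v u - br u v + Fs v = 0.

(* generalized metric, given through G^end (= +Id on E_+, -Id on E_- = E_+^perp) *)
Definition gen_metric (ip : E -> E -> A) (Gend : E -> E) : Prop :=
  alinear Gend /\ (forall u, Gend (Gend u) = u) /\
  (forall u v, ip (Gend u) (Gend v) = ip u v).

(* G = <.,.>|E_+ - <.,.>|E_- *)
Definition Gform (ip : E -> E -> A) (Gend : E -> E) (u v : E) : A := ip (Gend u) v.

Definition metric_preserving (ip : E -> E -> A) (pi : E -> A -> A) (Gend : E -> E)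
    (D : E -> E -> E) : Prop :=
  forall u v w, pi u (Gform ip Gend v w) =
    Gform ip Gend (D u v) w + Gform ip Gend v (D u w).

Definition gen_acs (ip : E -> E -> A) (J : E -> E) : Prop :=
  alinear J /\ (forall u, J (J u) = - u) /\ (forall u v, ip (J u) (J v) = ip u v).

Definition nijenhuis (br : E -> E -> E) (J : E -> E) (u v : E) : E :=
  br (J u) (J v) - br u v - J (br (J u) v + br u (J v)).

Definition integrable (br : E -> E -> E) (J : E -> E) : Prop :=
  forall u v, nijenhuis br J u v = 0.

Definition gen_kahler (ip : E -> E -> A) (br : E -> E -> E) (Gend J : E -> E) : Prop :=
  [/\ gen_metric ip Gend, gen_acs ip J,
      (forall u v, Gform ip Gend (J u) (J v) = Gform ip Gend u v),
      integrable br J & integrable br (fun u => Gend (J u))].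

Definition covJ (D : E -> E -> E) (J : E -> E) (u v : E) : E := D u (J v) - J (D u v).

End CourantDefs.

(* Main.v *)
Require Import Defs.
From HB Require Import structures.
From mathcomp Require Import all_boot all_order all_algebra.
From mathcomp Require Import ring.
Import Order.TTheory GRing.Theory Num.Theory.
Local Open Scope ring_scope.
Set Implicit Arguments. Unset Strict Implicit.

Lemma lin0 (V : zmodType) (x : V) : x = x + x -> x = 0.
Proof. move/(congr1 (fun y => y - x)); rewrite subrr addrK => H; by rewrite -H. Qed.

Section Basic.
Variables (R : realFieldType) (A : comAlgType R) (E : lmodType A).

Lemma natmul_inj (n : nat) (x : A) : (0 < n)%N -> n%:R * x = 0 -> x = 0.
Proof.
move=> n0; rewrite mulr_natl -scaler_nat => H.
have nz : (n%:R : R) != 0 by rewrite pnatr_eq0 -lt0n.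
by rewrite -[x]scale1r -(mulVf nz) -scalerA H scaler0.
Qed.

Lemma lin_0 [F : E -> E] : alinear F -> F 0 = 0.
Proof. move=> HF; apply: lin0; have := HF 1 0 0; by rewrite !scale1r addr0. Qed.
Lemma lin_D [F : E -> E] : alinear F -> forall u v, F (u + v) = F u + F v.
Proof. move=> HF u v; have := HF 1 u v; by rewrite !scale1r. Qed.
Lemma lin_Z [F : E -> E] : alinear F -> forall f u, F (f *: u) = f *: F u.
Proof. move=> HF f u; have := HF f u 0; by rewrite !addr0 lin_0 // addr0. Qed.
Lemma lin_N [F : E -> E] : alinear F -> forall u, F (- u) = - F u.
Proof. move=> HF u; by rewrite -scaleN1r lin_Z // scaleN1r. Qed.
Lemma lin_B [F : E -> E] : alinear F -> forall u v, F (u - v) = F u - F v.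
Proof. move=> HF u v; by rewrite lin_D // lin_N. Qed.
End Basic.

Section Main.
Variables (R : realFieldType) (A : comAlgType R) (E : lmodType A).
Variables (ip : E -> E -> A) (br : E -> E -> E) (pi : E -> A -> A)
  (G J : E -> E) (D : E -> E -> E).
Hypothesis HC : courant ip br pi.

Lemma ipS u v : ip u v = ip v u. Proof. exact: (ip_sym HC u v). Qed.
Lemma ipDr u v w : ip u (v + w) = ip u v + ip u w.
Proof. by have := ip_lin HC u 1 v w; rewrite scale1r mul1r. Qed.
Lemma ip0r u : ip u 0 = 0.
Proof. by apply: lin0; rewrite -ipDr addr0. Qed.
Lemma ipZr u f v : ip u (f *: v) = f * ip u v.
Proof. by have := ip_lin HC u f v 0; rewrite !addr0 ip0r addr0. Qed.
Lemma ipNr u v : ip u (- v) = - ip u v.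
Proof. by rewrite -scaleN1r ipZr mulN1r. Qed.
Lemma ipBr u v w : ip u (v - w) = ip u v - ip u w.
Proof. by rewrite ipDr ipNr. Qed.
Lemma ipDl u v w : ip (v + w) u = ip v u + ip w u.
Proof. by rewrite ipS ipDr !(ipS u). Qed.
Lemma ipZl u f v : ip (f *: v) u = f * ip v u.
Proof. by rewrite ipS ipZr ipS. Qed.
Lemma ipNl u v : ip (- v) u = - ip v u.
Proof. by rewrite ipS ipNr ipS. Qed.
Lemma ipBl u v w : ip (v - w) u = ip v u - ip w u.
Proof. by rewrite ipDl ipNl. Qed.
Lemma ip0l u : ip 0 u = 0.
Proof. by rewrite ipS ip0r. Qed.

Lemma solveA (c : A) [x y a : A] : a = 0 -> x = y + c * a -> x = y.
Proof. by move=> -> ; rewrite mulr0 addr0. Qed.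

Lemma eq_ip x y : (forall w, ip x w = ip y w) -> x = y.
Proof.
move=> H; apply/eqP; rewrite -subr_eq0; apply/eqP; apply: (ip_nondeg HC) => w.
by rewrite ipBl H subrr.
Qed.

Lemma pi0 u : pi u 0 = 0.
Proof. apply: lin0; have := (pi_der HC u).1 1 0 0; by rewrite !scale1r addr0. Qed.
Lemma piD u f g : pi u (f + g) = pi u f + pi u g.
Proof. by have := (pi_der HC u).1 1 f g; rewrite !scale1r. Qed.
Lemma piN u f : pi u (- f) = - pi u f.
Proof. by have := (pi_der HC u).1 (-1) f 0; rewrite !addr0 pi0 addr0 !scaleN1r. Qed.

Lemma acs_ipl (J0 : E -> E) : gen_acs ip J0 -> forall u v, ip (J0 u) v = - ip u (J0 v).
Proof.
case=> L [JJ O] u v; have := O u (J0 v); rewrite JJ ipNr => <-; by rewrite opprK.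
Qed.

Lemma brT (HT : torsion_free ip br D) u v w :
  ip (br u v) w = ip (D u v) w - ip (D v u) w + ip v (D w u).
Proof.
case: (HT u) => Fs [Had H]; have := H v.
have -> : br u v = D u v - D v u + Fs v.
  apply: eq_ip => z; have := congr1 (fun x => ip x z) (H v).
  rewrite !(ipDl, ipNl) ip0l => Hz.
  apply: (@solveA (-1) _ _ _ Hz); ring.
by rewrite !ipDl ipNl Had.
Qed.

Hypothesis HD : gen_connection ip pi D.
Hypothesis HT : torsion_free ip br D.
Hypothesis HM : metric_preserving ip pi G D.
Hypothesis HGm : gen_metric ip G.
Hypothesis HJ : gen_acs ip J.
Hypothesis HGJ : forall u v, Gform ip G (J u) (J v) = Gform ip G u v.

Lemma JL : alinear J. Proof. by case: HJ. Qed.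
Lemma GL : alinear G. Proof. by case: HGm. Qed.
Lemma JJ u : J (J u) = - u. Proof. by case: HJ => _ []. Qed.
Lemma GG u : G (G u) = u. Proof. by case: HGm => _ []. Qed.
Lemma ipJl u v : ip (J u) v = - ip u (J v). Proof. exact: (acs_ipl HJ u v). Qed.
Lemma ipGl u v : ip (G u) v = ip u (G v).
Proof. case: HGm => _ [GG2 O]; by rewrite -O GG2. Qed.
Lemma JD u v : J (u + v) = J u + J v. Proof. exact: (lin_D JL u v). Qed.
Lemma JN u : J (- u) = - J u. Proof. exact: (lin_N JL u). Qed.
Lemma JZ f u : J (f *: u) = f *: J u. Proof. exact: (lin_Z JL f u). Qed.
Lemma J0 : J 0 = 0. Proof. exact: (lin_0 JL). Qed.
Lemma GD u v : G (u + v) = G u + G v. Proof. exact: (lin_D GL u v). Qed.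
Lemma GN u : G (- u) = - G u. Proof. exact: (lin_N GL u). Qed.
Lemma GZ f u : G (f *: u) = f *: G u. Proof. exact: (lin_Z GL f u). Qed.

Lemma GJ u : G (J u) = J (G u).
Proof.
apply: eq_ip => w; rewrite ipJl.
have := HGJ u (- J w); rewrite /Gform JN JJ opprK => ->.
by rewrite ipNr.
Qed.

Lemma DD u v w : D u (v + w) = D u v + D u w. Proof. exact: (gc_add HD u v w). Qed.
Lemma D0 u : D u 0 = 0. Proof. by apply: lin0; rewrite -DD addr0. Qed.
Lemma DN u v : D u (- v) = - D u v.
Proof. by apply/eqP; rewrite -addr_eq0 -DD addNr D0. Qed.
Lemma DLl f u w v : D (f *: u + w) v = f *: D u v + D w v. Proof. exact: (gc_tensorial HD f u w v). Qed.
Lemma DZr u f v : D u (f *: v) = pi u f *: v + f *: D u v. Proof. exact: (gc_leibniz HD u f v). Qed.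
Lemma Dmet u v w : pi u (ip v w) = ip (D u v) w + ip v (D u w). Proof. exact: (gc_metric HD u v w). Qed.

Lemma DG u v : D u (G v) = G (D u v).
Proof.
apply: eq_ip => w; have := HM u v w; rewrite /Gform Dmet; exact: addIr.
Qed.

Definition K := covJ D J.
Lemma KE u v : K u v = D u (J v) - J (D u v). Proof. by []. Qed.
Lemma KLl f u w v : K (f *: u + w) v = f *: K u v + K w v.
Proof. rewrite !KE !DLl JD JZ; apply: eq_ip => z; rewrite !(ipDl, ipNl, ipZl); ring. Qed.
Lemma KDr u v w : K u (v + w) = K u v + K u w.
Proof. rewrite !KE !JD !DD JD; apply: eq_ip => z; rewrite !(ipDl, ipNl, ipZl); ring. Qed.
Lemma KZr u f v : K u (f *: v) = f *: K u v.
Proof. rewrite !KE !JZ !DZr JD !JZ; apply: eq_ip => z; rewrite !(ipDl, ipNl, ipZl); ring. Qed.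
Lemma KJ u v : K u (J v) = - J (K u v).
Proof. rewrite !KE JJ DN JD JN JJ; apply: eq_ip => z; rewrite !(ipDl, ipNl, ipZl); ring. Qed.
Lemma KG u v : K u (G v) = G (K u v).
Proof. by rewrite !KE -GJ !DG GD GN -GJ. Qed.
Lemma Kskew u v w : ip (K u v) w = - ip v (K u w).
Proof.
apply/eqP; rewrite -addr_eq0; apply/eqP.
have H1 := Dmet u (J v) w; have H2 := Dmet u v (J w).
rewrite [ip (J v) (D u w)]ipS ipJl piN in H1.
have H : ip (D u (J v)) w + ip (D u w) (J v) + (ip (D u v) (J w) + ip v (D u (J w))) = 0.
  by rewrite -H1 -H2 addNr.
rewrite !KE !(ipBl, ipBr) ipJl [ip v (J _)]ipS ipJl.
apply: (@solveA 1 _ _ _ H); ring.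
Qed.

Lemma Nform (J0 : E -> E) : gen_acs ip J0 -> forall u v w,
  ip (nijenhuis br J0 u v) w =
    ip (covJ D J0 (J0 u) v) w - ip (covJ D J0 (J0 v) u) w
  - ip (covJ D J0 v u) (J0 w) + ip (covJ D J0 u v) (J0 w)
  + ip (covJ D J0 (J0 w) u) v + ip (covJ D J0 w u) (J0 v).
Proof.
move=> HJ0 u v w; have JJ0 : forall x, J0 (J0 x) = - x by case: HJ0 => _ [].
rewrite /nijenhuis /covJ !(ipBl, ipDl, ipNl) !(acs_ipl HJ0) !(ipBl, ipDl, ipNl).
rewrite !(brT HT) !(ipS (J0 v) (D _ _)) !(ipS v (D _ _)) !JJ0 !ipNr.
ring.
Qed.

Definition kk x y z := ip (K x y) z.

Lemma K0l y : K 0 y = 0.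
Proof. apply: lin0; have := KLl 1 0 0 y; rewrite !scale1r addr0; exact. Qed.
Lemma kDl a b y z : kk (a + b) y z = kk a y z + kk b y z.
Proof. by rewrite /kk; have := KLl 1 a b y; rewrite !scale1r => ->; rewrite ipDl. Qed.
Lemma kZl f a y z : kk (f *: a) y z = f * kk a y z.
Proof. by rewrite /kk; have := KLl f a 0 y; rewrite !addr0 K0l addr0 => ->; rewrite ipZl. Qed.
Lemma kNl a y z : kk (- a) y z = - kk a y z.
Proof. by rewrite -scaleN1r kZl mulN1r. Qed.
Lemma kDm x a b z : kk x (a + b) z = kk x a z + kk x b z.
Proof. by rewrite /kk KDr ipDl. Qed.
Lemma kZm x f a z : kk x (f *: a) z = f * kk x a z.
Proof. by rewrite /kk KZr ipZl. Qed.
Lemma kNm x a z : kk x (- a) z = - kk x a z.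
Proof. by rewrite -scaleN1r kZm mulN1r. Qed.
Lemma kD3 x y a b : kk x y (a + b) = kk x y a + kk x y b.
Proof. by rewrite /kk ipDr. Qed.
Lemma kZ3 x y f a : kk x y (f *: a) = f * kk x y a.
Proof. by rewrite /kk ipZr. Qed.
Lemma kN3 x y a : kk x y (- a) = - kk x y a.
Proof. by rewrite /kk ipNr. Qed.
Lemma kJm x y z : kk x (J y) z = kk x y (J z).
Proof. by rewrite /kk KJ ipNl ipJl opprK. Qed.
Lemma kGm x y z : kk x (G y) z = kk x y (G z).
Proof. by rewrite /kk KG ipGl. Qed.
Lemma kS x a b : kk x a b = - kk x b a.
Proof. by rewrite /kk Kskew ipS. Qed.
Lemma kSJ x a b : kk x a (J b) = - kk x b (J a).
Proof. by rewrite kS kJm. Qed.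
Lemma kSG x a b : kk x a (G b) = - kk x b (G a).
Proof. by rewrite kS kGm. Qed.
Lemma kSJG x a b : kk x a (J (G b)) = - kk x b (J (G a)).
Proof. by rewrite kS kJm kGm GJ. Qed.

Ltac knorm := do 8 rewrite ?(kDl, kNl, kZl, kDm, kNm, kZm, kD3, kN3, kZ3,
  GJ, JJ, GG, JN, GN, JD, GD, JZ, GZ, kJm, kGm, opprK).
Ltac ksw a b := rewrite ?(kS _ a b) ?(kSJ _ a b) ?(kSG _ a b) ?(kSJG _ a b).

Hypothesis HNJ : integrable br J.
Hypothesis HNGJ : integrable br (fun u => G (J u)).

Definition IJe u v w := kk (J u) v w - kk (J v) u w - kk v u (J w) + kk u v (J w)
  + kk (J w) u v + kk w u (J v).
Definition IGe u v w := kk (G (J u)) v (G w) - kk (G (J v)) u (G w)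
  - kk v u (G (G (J w))) + kk u v (G (G (J w))) + kk (G (J w)) u (G v)
  + kk w u (G (G (J v))).

Lemma IJ u v w : IJe u v w = 0.
Proof. by rewrite /IJe /kk -(Nform HJ) HNJ ip0l. Qed.

Lemma GJacs : gen_acs ip (fun u => G (J u)).
Proof.
split; last split.
- move=> f u v; by rewrite JD JZ GD GZ.
- move=> u; by rewrite GJ GG JJ.
- move=> u v; rewrite ipGl GG; by case: HJ => _ [_ ->].
Qed.

Lemma covGJ a b : covJ D (fun u => G (J u)) a b = G (K a b).
Proof. by rewrite /covJ KE DG GD GN. Qed.

Lemma IG u v w : IGe u v w = 0.
Proof.
have := Nform GJacs u v w; rewrite HNGJ ip0l /= !covGJ !ipGl => H.
by rewrite /IGe /kk H.
Qed.

Definition FF u v w := IJe u v w - IGe u v w.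

Lemma Kmix0 u v w : kk (J u) v w = kk (J (G u)) v (G w).
Proof.
have H4 : 4%:R * (kk (J u) v w - kk (J (G u)) v (G w)) =
  FF u v w + FF u (G v) (G w) - FF (G u) (G v) w - FF (G u) v (G w).
  rewrite /FF /IJe /IGe; knorm; ksw v u; ksw w u; ksw w v. ring.
move: H4; rewrite /FF !IJ !IG => H4; rewrite ?subrr ?addr0 ?subr0 ?subrr in H4.
have := natmul_inj (n:=4) isT H4.
by move/eqP; rewrite subr_eq0 => /eqP.
Qed.

Lemma kGl x y z : kk (G x) y z = kk x y (G z).
Proof.
have H := Kmix0 (- J x) y (G z).
do 4 rewrite ?(JN, JJ, opprK, GN, GJ, GG) in H.
by rewrite H.
Qed.
Lemma kJGl x y z : kk (J (G x)) y z = kk (J x) y (G z).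
Proof. by rewrite -GJ kGl. Qed.

Ltac knorm2 := do 8 rewrite ?(kDl, kNl, kZl, kDm, kNm, kZm, kD3, kN3, kZ3,
  GJ, JJ, GG, JN, GN, JD, GD, JZ, GZ, kJm, kGm, kGl, kJGl, opprK).

Variable Asym : E -> E -> E.
Definition hh : A := (2^-1 : R)%:A.
Definition qq : A := (4^-1 : R)%:A.
Definition ee : A := (8^-1 : R)%:A.
Hypothesis HAs : forall u v w, ip (Asym u v) w = hh * (kk v u w + kk w u v).

Variable Dt : E -> E -> E.
Hypothesis DtE : forall u v, Dt u v = D u v - hh *: J (covJ D J u v) - qq *: (Asym u (J v) + J (Asym u v)).

Lemma ccE u v w : ip (Dt u v) w = ip (D u v) w + hh * kk u v (J w)
  - qq * hh * (kk (J v) u w + kk w u (J v) - kk v u (J w) - kk (J w) u v).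
Proof.
rewrite DtE !(ipBl, ipDl, ipZl, ipNl) ipJl -/(K) -/(kk u v (J w)) ipJl !HAs.
ring.
Qed.

Lemma algM (a b : R) : a%:A * b%:A = (a * b)%:A :> A.
Proof. by rewrite mulr_algl scalerA. Qed.
Lemma algN (n : nat) : (n%:R : A) = (n%:R : R)%:A.
Proof. by rewrite scaler_nat. Qed.

Lemma hE : hh = 4%:R * ee.
Proof.
rewrite /hh /ee algN algM; congr (_ %:A).
field; by rewrite ?pnatr_eq0.
Qed.
Lemma qhE : qq * hh = ee.
Proof.
rewrite /hh /ee /qq algM; congr (_ %:A).
field; by rewrite ?pnatr_eq0.
Qed.
Lemma h2 : hh + hh - 1 = 0.
Proof.
rewrite /hh -scalerDl.
have -> : (2^-1 + 2^-1 : R) = 1 by field; rewrite ?pnatr_eq0.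
by rewrite scale1r subrr.
Qed.

Lemma Dt_conn : gen_connection ip pi Dt.
Proof.
split.
- move=> f u u' v; apply: eq_ip => z.
  rewrite !(ipDl, ipZl) !ccE DLl !(ipDl, ipZl); knorm2.
  ksw u' u; ksw v u; ksw z u; ksw v u'; ksw z u'; ksw z v. ring.
- move=> u v v'; apply: eq_ip => z.
  rewrite !(ipDl, ipZl) !ccE DD !(ipDl, ipZl); knorm2.
  ksw v u; ksw v' u; ksw z u; ksw v' v; ksw z v; ksw z v'. ring.
- move=> u f v; apply: eq_ip => z.
  rewrite !(ipDl, ipZl) !ccE DZr !(ipDl, ipZl); knorm2.
  ksw v u; ksw z u; ksw z v. ring.
- move=> u v w.
  rewrite [ip v (Dt u w)]ipS !ccE Dmet [ip v (D u w)]ipS; knorm2.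
  ksw v u; ksw w u; ksw w v. ring.
Qed.

Lemma Dt_met : metric_preserving ip pi G Dt.
Proof.
move=> u v w; have := HM u v w; rewrite /Gform => ->.
rewrite !ipGl [ip v (G (Dt u w))]ipS [ip v (G (D u w))]ipS !ipGl !ccE; knorm2.
ksw v u; ksw w u; ksw w v. ring.
Qed.

Lemma solveA2 (c d : A) [x y a b : A] : a = 0 -> b = 0 -> x = y + c * a + d * b -> x = y.
Proof. by move=> -> -> ; rewrite !mulr0 !addr0. Qed.

Lemma kKE u v z : kk u v z - (ip (D u (J v)) z + ip (D u v) (J z)) = 0.
Proof. by rewrite /kk KE ipBl ipJl opprK subrr. Qed.

Lemma Dt_J u v : covJ Dt J u v = 0.
Proof.
apply: eq_ip => z; rewrite /covJ ip0l ipBl ipJl opprK !ccE.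
apply: (@solveA2 (- kk u v z) (-1) _ _ _ _ h2 (kKE u v z)).
knorm2. ksw z v. ring.
Qed.

Lemma Dt_tf : torsion_free ip br Dt.
Proof.
move=> u; exists (fun v => br u v - Dt u v + Dt v u); split.
- move=> v w /=.
  rewrite !(ipDl, ipNl) (brT HT) [ip v (Dt w u)]ipS [ip v (D w u)]ipS !ccE.
  apply: (@solveA (- (2%:R * ee)) _ _ _ (IJ u v w)).
  rewrite /IJe qhE hE; knorm2. ksw v u; ksw w u; ksw w v. ring.
- move=> v; apply: eq_ip => z; rewrite ip0l !(ipDl, ipNl); ring.
Qed.
End Main.

Unset Implicit Arguments.

Theorem theorem5p4 (R : realFieldType) (A : comAlgType R) (E : lmodType A)
    (ip : E -> E -> A) (br : E -> E -> E) (pi : E -> A -> A)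
    (Gend J : E -> E) (D : E -> E -> E) (Asym : E -> E -> E) :
  courant ip br pi ->
  gen_kahler ip br Gend J ->
  gen_connection ip pi D -> torsion_free ip br D -> metric_preserving ip pi Gend D ->
  (* Asym u = symmetric part of A_u : v |-> (D_v J) u *)
  (forall u v w, ip (Asym u v) w =
     (2^-1 : R)%:A * (ip (covJ D J v u) w + ip v (covJ D J w u))) ->
  let Dt := fun u v => D u v - (2^-1 : R)%:A *: J (covJ D J u v)
                        - (4^-1 : R)%:A *: (Asym u (J v) + J (Asym u v)) in
  [/\ gen_connection ip pi Dt, torsion_free ip br Dt,
      metric_preserving ip pi Gend Dt & forall u v, covJ Dt J u v = 0].
Proof.
move=> HC [HGm HJ HGJ HNJ HNGJ] HD HT HM HAs Dt.
have HAs' : forall u v w, ip (Asym u v) w = hh A * (kk ip J D v u w + kk ip J D w u v).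
  move=> u v w; rewrite HAs (ipS HC v); by [].
have DtE : forall u v, Dt u v = D u v - hh A *: J (covJ D J u v)
     - qq A *: (Asym u (J v) + J (Asym u v)) by [].
split.
- exact: (Dt_conn HC HD HJ HAs' DtE).
- exact: (Dt_tf HC HD HT HJ HNJ HAs' DtE).
- exact: (Dt_met HC HD HT HM HGm HJ HGJ HNJ HNGJ HAs' DtE).
- exact: (Dt_J HC HD HJ HAs' DtE).
Qed.
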